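(* Let $M$ be a self-similar right $R$-module. Then $M$ is quasi-pseudo principally injective if and only if $M$ is semisimple.
   Context: All rings are associative with identity and all modules are unitary right $R$-modules. A submodule $N$ of $M$ is called $M$-cyclic if $N\cong M/L$ for some submodule $L$ of $M$ (equivalently, $N$ is the image of an endomorphism of $M$). $M$ is quasi-pseudo principally injective if for every $M$-cyclic submodule $A$ of $M$, every $R$-monomorphism $A\to M$ extends to an $R$-endomorphism of $M$. A module $M$ is self-similar if every nonzero submodule of $M$ is isomorphic to $M$. A module is semisimple if every submodule is a direct summand. *)

(* Defs.v *)
(* Right R-modules are modelled as left modules over the
   converse ring R^c (lmodType R^c). *)
From HB Require Import structures.
From mathcomp Require Import all_boot all_order all_algebra.
Set Implicit Arguments. Unset Strict Implicit. Unset Printing Implicit Defensive.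
Import GRing.Theory.
Local Open Scope ring_scope.

Section ModDefs.
Variables (R : pzRingType) (M : lmodType R^c).

Definition is_submodule (N : M -> Prop) : Prop :=
  [/\ N 0, (forall x y, N x -> N y -> N (x + y))
         & (forall (r : R^c) x, N x -> N (r *: x))].

Definition is_endo (f : M -> M) : Prop :=
  (forall x y, f (x + y) = f x + f y) /\
  (forall (r : R^c) x, f (r *: x) = r *: f x).

Definition is_hom_on (A : M -> Prop) (f : M -> M) : Prop :=
  (forall x y, A x -> A y -> f (x + y) = f x + f y) /\
  (forall (r : R^c) x, A x -> f (r *: x) = r *: f x).

Definition is_mono_on (A : M -> Prop) (f : M -> M) : Prop :=
  is_hom_on A f /\ (forall x y, A x -> A y -> f x = f y -> x = y).

Definition is_image (g : M -> M) (N : M -> Prop) : Prop :=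
  forall x, N x <-> exists y, x = g y.

Definition M_cyclic (A : M -> Prop) : Prop :=
  is_submodule A /\ exists g, is_endo g /\ is_image g A.

Definition quasi_pseudo_principally_injective : Prop :=
  forall A : M -> Prop, M_cyclic A ->
  forall f : M -> M, is_mono_on A f ->
  exists g : M -> M, is_endo g /\ (forall x, A x -> g x = f x).

Definition iso_to_M (N : M -> Prop) : Prop :=
  exists f : M -> M, [/\ is_endo f, injective f & is_image f N].

Definition self_similar : Prop :=
  forall N : M -> Prop, is_submodule N -> (exists x, N x /\ x <> 0) -> iso_to_M N.

Definition semisimple : Prop :=
  forall N : M -> Prop, is_submodule N ->
  exists K : M -> Prop, [/\ is_submodule K,
     (forall x, N x -> K x -> x = 0)
   & (forall x, exists a b, [/\ N a, K b & x = a + b])].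

End ModDefs.

(* Main.v *)
Require Import Defs.
From HB Require Import structures.
From mathcomp Require Import all_boot all_order all_algebra.
From Stdlib Require Import ClassicalEpsilon.
Import GRing.Theory.
Local Open Scope ring_scope.

Section H.
Variables (R : pzRingType) (M : lmodType R^c).

Lemma sub_opp (N : M -> Prop) : is_submodule N -> forall x, N x -> N (- x).
Proof. move=> [_ _ Hs] x Nx; rewrite -scaleN1r; exact: Hs. Qed.

Lemma sub_sub (N : M -> Prop) : is_submodule N -> forall x y, N x -> N y -> N (x - y).
Proof. move=> HN x y Nx Ny; case: (HN) => _ Ha _; apply: Ha => //; exact: sub_opp. Qed.

Lemma dec_uniq (N K : M -> Prop) : is_submodule N -> is_submodule K ->
  (forall x, N x -> K x -> x = 0) ->
  forall a b a' b', N a -> K b -> N a' -> K b' -> a + b = a' + b' -> a = a'.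
Proof.
move=> HN HK Hd a b a' b' Na Kb Na' Kb' E.
apply/eqP; rewrite -subr_eq0; apply/eqP; apply: Hd; first exact: sub_sub.
have -> : a - a' = b' - b.
  apply: (addIr (a' + b)).
  rewrite [LHS]addrA (subrK a') [RHS]addrCA (subrK b).
  done.
exact: sub_sub.
Qed.

End H.
Arguments dec_uniq {R M N K}.

Theorem proposition2p4 (R : pzRingType) (M : lmodType R^c) :
  self_similar M ->
  (quasi_pseudo_principally_injective M <-> semisimple M).
Proof.
move=> Hss; split.
- move=> Hq N HN.
  case: (classic (exists x, N x /\ x <> 0)) => [Hnz|Hz]; last first.
    exists (fun _ => True); split.
    + by split.
    + move=> x Nx _; apply: NNPP => nx; apply: Hz; by exists x.
    + by move=> x; exists 0, x; split => //; [case: HN | rewrite add0r].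
  have [h [[hD hZ] hinj himg]] := Hss N HN Hnz.
  pose f x := epsilon (inhabits (0 : M)) (fun y => x = h y).
  have hf : forall x, N x -> h (f x) = x.
    move=> x Nx; have := (himg x).1 Nx => ex.
    by rewrite -(epsilon_spec (inhabits (0:M)) (fun y => x = h y) ex).
  have fh : forall y, f (h y) = y.
    move=> y; apply: hinj; apply: hf; apply/(himg _).2; by exists y.
  have Nh : forall y, N (h y) by move=> y; apply/(himg _).2; exists y.
  have [g [[gD gZ] gext]] : exists g : M -> M, is_endo g /\ (forall x, N x -> g x = f x).
    apply: Hq.
    + split => //; exists h; split => //; by split.
    + split; first split.
      * move=> x y Nx Ny; rewrite -(hf x Nx) -(hf y Ny) -hD !fh //.
      * move=> r x Nx; rewrite -(hf x Nx) -hZ !fh //.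
      * move=> x y Nx Ny E; by rewrite -(hf x Nx) -(hf y Ny) E.
  have g0 : g 0 = 0.
    by apply: (addIr (g 0)); rewrite -gD !add0r.
  have gN : forall x, g (- x) = - g x.
    by move=> x; apply: (addIr (g x)); rewrite -gD !addNr.
  exists (fun x => g x = 0); split.
  + split => //.
    * by move=> x y gx gy; rewrite gD gx gy addr0.
    * by move=> r x gx; rewrite gZ gx scaler0.
  + move=> x Nx gx; rewrite -(hf x Nx) -gext // gx.
    by apply: (addIr (h 0)); rewrite -hD !add0r.
  + move=> x; exists (h (g x)), (x - h (g x)); split => //.
    * by rewrite gD gN (gext _ (Nh (g x))) fh subrr.
    * by rewrite addrC subrK.
- move=> Hs A [HA _] f [[fD fZ] _].
  have [K [HK Hd Hc]] := Hs A HA.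
  pose P x a := exists b, [/\ A a, K b & x = a + b].
  pose p x := epsilon (inhabits (0 : M)) (P x).
  have pP : forall x, P x (p x).
    move=> x; apply: epsilon_spec; have [a [b [Aa Kb E]]] := Hc x.
    by exists a, b.
  have pU : forall x a b, A a -> K b -> x = a + b -> p x = a.
    move=> x a b Aa Kb E; have [b' [Ap Kb' E']] := pP x.
    exact: (dec_uniq HA HK Hd _ _ _ _ Ap Kb' Aa Kb (etrans (esym E') E)).
  have [A0 AD AZ] := HA; have [K0 KD KZ] := HK.
  exists (fun x => f (p x)); split; first split.
  + move=> x y; have [b [Ap Kb E]] := pP x; have [b' [Ap' Kb' E']] := pP y.
    rewrite (pU (x + y) (p x + p y) (b + b')) ?fD //; first by apply: AD.
      by apply: KD.
    by rewrite {1}E {1}E' addrACA.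
  + move=> r x; have [b [Ap Kb E]] := pP x.
    rewrite (pU (r *: x) (r *: p x) (r *: b)) ?fZ //; first by apply: AZ.
      by apply: KZ.
    by rewrite {1}E scalerDr.
  + by move=> x Ax; rewrite (pU x x 0) // addr0.
Qed.
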